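(* Let $P:[-1,\infty)\to\mathbb{C}\cong\mathbb{R}^2$ be the log-aesthetic curve with shape parameter $\alpha=2$ and $\Lambda=1$ (a circle involute), $P(\theta)=\int_0^\theta(\psi+1)e^{i\psi}\,d\psi$, and let $\delta=\tfrac{2\pi}{3}$. Let $I_\delta$ be its isoptic curve for the angle $\gamma=\pi-\delta=\pi/3$, parametrized for $\theta\ge -1$ by $$I_\delta(\theta)=P(\theta)+\csc(\delta)\Big(V_x(\theta)\sin(\theta+\delta)-V_y(\theta)\cos(\theta+\delta)\Big)(\cos\theta,\sin\theta)^T,$$ where $(V_x(\theta),V_y(\theta))^T$ is the vector $P(\theta+\delta)-P(\theta)$ (i.e. $I_\delta(\theta)$ is the intersection of the tangent lines of $P$ at $P(\theta)$ and $P(\theta+\delta)$). Then the logarithmic curvature graph of $I_\delta$ is not a straight line (its slope is not constant); hence the isoptic is not a log-aesthetic curve, and in particular the circle involute is not autoisoptic. Moreover, the slope of the logarithmic curvature graph of $I_\delta$ (measured between the points with parameters $\theta$ and $\theta+\pi$) tends to $2$ as $\theta\to\infty$.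
   Context: For a regular plane curve with radius of curvature $\rho$ and arc length $s$, the logarithmic curvature graph (LCG) is the curve traced by the points $\big(\log\rho,\ \log(\rho\,|ds/d\rho|)\big)$ along the curve. A log-aesthetic curve with shape parameter $\alpha$ is a curve whose LCG is a straight line of slope $\alpha$, i.e. $\log(\rho\, ds/d\rho)=\alpha\log\rho+c$ for a constant $c$. A curve is called autoisoptic if it coincides (up to similarity) with its isoptic curve. The isoptic curve for angle $\gamma\in(0,\pi)$ is the locus of points from which the curve is seen under angle $\gamma$ (intersection points of pairs of tangent lines meeting at angle $\gamma$). *)

(* Defs.v *)
From Stdlib Require Import Reals.
From Coquelicot Require Import Coquelicot.
Open Scope R_scope.

Definition Px (t : R) : R := RInt (fun psi => (psi + 1) * cos psi) 0 t.
Definition Py (t : R) : R := RInt (fun psi => (psi + 1) * sin psi) 0 t.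

Definition delta : R := 2 * PI / 3.

Definition Vx (t : R) : R := Px (t + delta) - Px t.
Definition Vy (t : R) : R := Py (t + delta) - Py t.

Definition tI (t : R) : R :=
  / sin delta * (Vx t * sin (t + delta) - Vy t * cos (t + delta)).
Definition Ix (t : R) : R := Px t + tI t * cos t.
Definition Iy (t : R) : R := Py t + tI t * sin t.

Definition speed (x y : R -> R) (t : R) : R :=
  sqrt (Derive x t ^ 2 + Derive y t ^ 2).
Definition curv_num (x y : R -> R) (t : R) : R :=
  Derive x t * Derive (Derive y) t - Derive y t * Derive (Derive x) t.
Definition rho (x y : R -> R) (t : R) : R :=
  speed x y t ^ 3 / Rabs (curv_num x y t).
(* LCG point (log rho, log (rho |ds/drho|)), with ds/drho = (ds/dt)/(drho/dt) *)
Definition lcg_X (x y : R -> R) (t : R) : R := ln (rho x y t).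
Definition lcg_Y (x y : R -> R) (t : R) : R :=
  ln (rho x y t * Rabs (speed x y t / Derive (rho x y) t)).

(** The LCG is genuinely defined at parameter t: the curve is twice
    differentiable and regular there, has nonzero curvature, and rho has a
    nonzero derivative (so that ds/drho exists). *)
Definition lcg_regular (x y : R -> R) (t : R) : Prop :=
  ex_derive x t /\ ex_derive y t /\
  ex_derive (Derive x) t /\ ex_derive (Derive y) t /\
  0 < speed x y t /\ curv_num x y t <> 0 /\
  ex_derive (rho x y) t /\ Derive (rho x y) t <> 0.

(* Main.v *)
Require Import Defs.
From Stdlib Require Import Reals Lra Psatz FunctionalExtensionality Classical.
From Coquelicot Require Import Coquelicot.
Open Scope R_scope.

Lemma Px_eq t : Px t = cos t + (t+1) * sin t - 1.
Proof.
  unfold Px.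
  assert (H := is_RInt_derive (fun x => cos x + (x+1) * sin x) (fun psi => (psi + 1) * cos psi) 0 t).
  apply is_RInt_unique in H.
  - rewrite H. unfold minus, plus, opp; simpl. rewrite cos_0, sin_0. ring.
  - intros x _. auto_derive; auto. ring.
  - intros x _. apply (ex_derive_continuous (V:=R_NormedModule)). auto_derive; auto.
Qed.

Lemma Py_eq t : Py t = sin t - (t+1) * cos t + 1.
Proof.
  unfold Py.
  assert (H := is_RInt_derive (fun x => sin x - (x+1) * cos x) (fun psi => (psi + 1) * sin psi) 0 t).
  apply is_RInt_unique in H.
  - rewrite H. unfold minus, plus, opp; simpl. rewrite cos_0, sin_0. ring.
  - intros x _. auto_derive; auto. ring.
  - intros x _. apply (ex_derive_continuous (V:=R_NormedModule)). auto_derive; auto.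
Qed.

Definition r3 := sqrt 3.
Definition kk := 2 * delta / r3.
Definition ee := 2 - kk / 2.
Definition uu t := r3 * (t+1) + kk.

Lemma r3_sq : r3 * r3 = 3.
Proof. unfold r3. apply sqrt_sqrt. lra. Qed.
Lemma r3_pos : 0 < r3.
Proof. unfold r3. apply sqrt_lt_R0. lra. Qed.
Lemma r3_bnd : 17/10 < r3 < 7/4.
Proof. pose proof r3_sq; pose proof r3_pos. nra. Qed.

Lemma sin_delta : sin delta = r3 / 2.
Proof. unfold delta, r3. replace (2 * PI / 3) with (2 * (PI/3)) by field. apply sin_2PI3. Qed.
Lemma cos_delta : cos delta = - 1 / 2.
Proof. unfold delta. replace (2 * PI / 3) with (2 * (PI/3)) by field. apply cos_2PI3. Qed.

Lemma sc t : sin t ^ 2 + cos t ^ 2 = 1.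
Proof. pose proof (sin2_cos2 t). unfold Rsqr in H. lra. Qed.

Lemma tI_eq t : tI t = uu t - 1.
Proof.
  unfold tI, Vx, Vy. rewrite !Px_eq, !Py_eq.
  set (b := t + delta).
  assert (H1 : cos t * sin b - sin t * cos b = sin delta).
  { unfold b. rewrite sin_plus, cos_plus.
    transitivity (sin delta * (sin t ^ 2 + cos t ^ 2)); [ring| rewrite sc; ring]. }
  assert (H2 : sin t * sin b + cos t * cos b = cos delta).
  { unfold b. rewrite sin_plus, cos_plus.
    transitivity (cos delta * (sin t ^ 2 + cos t ^ 2)); [ring| rewrite sc; ring]. }
  assert (H3 := sc b).
  replace ((cos b + (b + 1) * sin b - 1 - (cos t + (t + 1) * sin t - 1)) * sin b -
     (sin b - (b + 1) * cos b + 1 - (sin t - (t + 1) * cos t + 1)) * cos b)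
   with ((b+1) * (sin b ^2 + cos b ^2) - (cos t * sin b - sin t * cos b) - (t+1) * (sin t * sin b + cos t * cos b)) by ring.
  rewrite H1, H2, H3, sin_delta, cos_delta. unfold b, uu, kk.
  pose proof r3_sq; pose proof r3_pos.
  field_simplify; [|lra..].
  replace (r3 ^ 2) with 3 by (rewrite <- r3_sq; ring). f_equal; ring.
Qed.
Lemma via_r3 (X Y c : R) : X - Y = (r3*r3-3)*c -> X = Y.
Proof. rewrite r3_sq. intros; lra. Qed.
Definition AA t := t + 1 + r3.
Definition BB t := uu t - 1.
Definition qf t := 2 * (t+1) + r3 * kk / 2.

Lemma AB_q t : AA t * AA t + BB t * BB t = qf t * qf t + ee * ee.
Proof. apply (via_r3 _ _ (1 + (t+1)*(t+1) - kk*kk/4)). unfold AA, BB, uu, qf, ee. field. Qed.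
Lemma curv_q t : r3 * AA t - BB t = 2 * ee.
Proof. apply (via_r3 _ _ 1). unfold AA, BB, uu, qf, ee. field. Qed.

Lemma Ix_fun : Ix = fun t => (t+1) * sin t + uu t * cos t - 1.
Proof. apply functional_extensionality; intro t. unfold Ix. rewrite Px_eq, tI_eq. ring. Qed.
Lemma Iy_fun : Iy = fun t => uu t * sin t - (t+1) * cos t + 1.
Proof. apply functional_extensionality; intro t. unfold Iy. rewrite Py_eq, tI_eq. ring. Qed.

Lemma dIx t : is_derive Ix t (AA t * cos t - BB t * sin t).
Proof. rewrite Ix_fun. unfold AA, BB, uu. auto_derive; auto. unfold uu. ring. Qed.
Lemma dIy t : is_derive Iy t (AA t * sin t + BB t * cos t).
Proof. rewrite Iy_fun. unfold AA, BB, uu. auto_derive; auto. unfold uu. ring. Qed.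
Lemma DIx : Derive Ix = fun t => AA t * cos t - BB t * sin t.
Proof. apply functional_extensionality; intro t. apply is_derive_unique, dIx. Qed.
Lemma DIy : Derive Iy = fun t => AA t * sin t + BB t * cos t.
Proof. apply functional_extensionality; intro t. apply is_derive_unique, dIy. Qed.
Lemma ddIx t : is_derive (Derive Ix) t (cos t - AA t * sin t - r3 * sin t - BB t * cos t).
Proof. rewrite DIx. unfold AA, BB, uu. auto_derive; auto. unfold uu. ring. Qed.
Lemma ddIy t : is_derive (Derive Iy) t (sin t + AA t * cos t + r3 * cos t - BB t * sin t).
Proof. rewrite DIy. unfold AA, BB, uu. auto_derive; auto. unfold uu. ring. Qed.
Lemma DDIx : Derive (Derive Ix) = fun t => cos t - AA t * sin t - r3 * sin t - BB t * cos t.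
Proof. apply functional_extensionality; intro t. apply is_derive_unique, ddIx. Qed.
Lemma DDIy : Derive (Derive Iy) = fun t => sin t + AA t * cos t + r3 * cos t - BB t * sin t.
Proof. apply functional_extensionality; intro t. apply is_derive_unique, ddIy. Qed.

Definition xq q := q * q + ee * ee.

Lemma speed_eq t : speed Ix Iy t = sqrt (xq (qf t)).
Proof.
  unfold speed, xq. rewrite DIx, DIy. f_equal. rewrite <- AB_q.
  transitivity ((AA t * AA t + BB t * BB t) * (sin t ^ 2 + cos t ^ 2)); [ring | rewrite sc; ring].
Qed.
Lemma curv_eq t : curv_num Ix Iy t = xq (qf t) + 2 * ee.
Proof.
  unfold curv_num, xq. rewrite DDIx, DDIy, DIx, DIy. rewrite <- (AB_q t). replace (2 * ee) with (r3 * AA t - BB t) by apply curv_q.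
  transitivity ((AA t * AA t + BB t * BB t + r3 * AA t - BB t) * (sin t ^ 2 + cos t ^ 2)); [ring | rewrite sc; ring].
Qed.

Lemma PI_bnd : 3 < PI <= 4.
Proof. pose proof PI2_3_2; pose proof PI_4. lra. Qed.
Lemma kk_eq : kk * r3 = 4 * PI / 3.
Proof. unfold kk, delta. pose proof r3_pos. field. lra. Qed.
Lemma ee_bnd : 0 < ee < 1.
Proof.
  pose proof kk_eq; pose proof r3_bnd; pose proof PI_bnd.
  unfold ee. split; nra.
Qed.
Lemma kk_pos : 0 < kk.
Proof. pose proof kk_eq; pose proof r3_bnd; pose proof PI_bnd. nra. Qed.
Lemma qf_pos t : -1 <= t -> 0 < qf t.
Proof. intros. unfold qf. pose proof kk_pos; pose proof r3_pos. nra. Qed.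
Lemma qf_ge t : 2 * (t+1) <= qf t.
Proof. intros. unfold qf. pose proof kk_pos; pose proof r3_pos. nra. Qed.
Lemma qf_PI t : qf (t + PI) = qf t + 2 * PI.
Proof. unfold qf. ring. Qed.

Lemma xq_pos q : 0 < xq q.
Proof. unfold xq. pose proof ee_bnd. nra. Qed.

Definition rq q := sqrt (xq q) ^ 3 / (xq q + 2 * ee).
Definition drq q := q * sqrt (xq q) * (xq q + 6 * ee) / (xq q + 2 * ee) ^ 2.

Lemma rho_eq : rho Ix Iy = fun t => rq (qf t).
Proof.
  apply functional_extensionality; intro t. unfold rho, rq.
  rewrite speed_eq, curv_eq. rewrite Rabs_pos_eq. reflexivity.
  pose proof (xq_pos (qf t)); pose proof ee_bnd. lra.
Qed.

Lemma rq_der q : is_derive rq q (drq q).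
Proof.
  unfold rq, drq. pose proof (xq_pos q) as Hx. pose proof ee_bnd. unfold xq in *.
  auto_derive.
  - repeat split; lra.
  - assert (HS := sqrt_sqrt (q*q+ee*ee) (Rlt_le _ _ Hx)).
    assert (HS0 := sqrt_lt_R0 _ Hx).
    set (S := sqrt (q*q+ee*ee)) in *. clearbody S.
    rewrite <- HS. field. split; nra.
Qed.

Lemma rho_der t : is_derive (rho Ix Iy) t (2 * drq (qf t)).
Proof.
  rewrite rho_eq.
  apply (is_derive_comp rq qf t (drq (qf t)) 2).
  apply rq_der. unfold qf. auto_derive; auto. ring.
Qed.

Lemma ln_sqrt' x : 0 < x -> ln (sqrt x) = ln x / 2.
Proof.
  intros. assert (H1 := sqrt_lt_R0 _ H).
  rewrite <- (sqrt_sqrt x) at 2 by lra. rewrite ln_mult by auto. field.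
Qed.

Definition Xq q := 3/2 * ln (xq q) - ln (xq q + 2 * ee).
Definition Gq q := 3 * ln (xq q + 2 * ee) - ln 2 - ln q - 3/2 * ln (xq q) - ln (xq q + 6 * ee).

Lemma lnX q : ln (rq q) = Xq q.
Proof.
  unfold rq, Xq. pose proof (xq_pos q). pose proof ee_bnd. pose proof (sqrt_lt_R0 _ H).
  rewrite ln_div, ln_pow, ln_sqrt'; auto; try lra.
  simpl. field. apply pow_lt; auto.
Qed.

Lemma lnY q : 0 < q -> ln (rq q * Rabs (sqrt (xq q) / (2 * drq q))) = 2 * Xq q + Gq q.
Proof.
  intros Hq. unfold rq, drq, Xq, Gq. pose proof (xq_pos q). pose proof ee_bnd. pose proof (sqrt_lt_R0 _ H).
  assert (HS := sqrt_sqrt _ (Rlt_le _ _ H)).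
  assert (HlnS := ln_sqrt' _ H).
  set (S := sqrt (xq q)) in *. set (x := xq q) in *. clearbody S x.
  rewrite Rabs_pos_eq.
  2:{ apply Rlt_le. apply Rdiv_lt_0_compat; auto. apply Rmult_lt_0_compat. lra.
      apply Rdiv_lt_0_compat. apply Rmult_lt_0_compat. nra. lra. apply pow_lt; lra. }
  replace (S ^ 3 / (x + 2 * ee) * (S / (2 * (q * S * (x + 6 * ee) / (x + 2 * ee) ^ 2))))
    with (S * S * S * (x + 2 * ee) * / 2 * / q * / (x + 6 * ee)) by (field; repeat split; lra).
  rewrite !ln_mult; try lra; try (apply Rinv_0_lt_compat; lra); repeat (apply Rmult_lt_0_compat; try lra).
  rewrite !ln_Rinv by lra. rewrite HlnS. field. all: apply Rinv_0_lt_compat; lra.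
Qed.

Definition dX q := 3 * q / xq q - 2 * q / (xq q + 2 * ee).
Definition dG q := 6 * q / (xq q + 2 * ee) - / q - 3 * q / xq q - 2 * q / (xq q + 6 * ee).

Lemma Xq_der q : is_derive Xq q (dX q).
Proof.
  unfold Xq, dX. pose proof (xq_pos q) as Hx. pose proof ee_bnd. unfold xq in *.
  auto_derive. repeat split; lra. field. lra.
Qed.
Lemma Gq_der q : 0 < q -> is_derive Gq q (dG q).
Proof.
  intros Hq. unfold Gq, dG. pose proof (xq_pos q) as Hx. pose proof ee_bnd. unfold xq in *.
  auto_derive. repeat split; lra. field. repeat split; lra.
Qed.

Lemma dG_eq q : 0 < q -> dG q = - (ee*ee*q^4 + (2*ee^4+8*ee^3+48*ee^2)*q^2 + (ee^2+2*ee)*ee^2*(ee^2+6*ee))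
   / (q * (xq q + 2 * ee) * xq q * (xq q + 6 * ee)).
Proof.
  intros Hq. unfold dG. pose proof (xq_pos q) as Hx. pose proof ee_bnd. unfold xq in *.
  field. repeat split; lra.
Qed.

Lemma cross_le a b d1 d2 : 0 < d1 -> 0 < d2 -> a * d2 <= b * d1 -> a / d1 <= b / d2.
Proof.
  intros. assert (a / d1 - b / d2 = (a * d2 - b * d1) / (d1 * d2)) by (field; lra).
  assert ((a * d2 - b * d1) / (d1 * d2) <= 0).
  { unfold Rdiv. apply Rmult_le_0_r. lra. apply Rlt_le, Rinv_0_lt_compat. nra. }
  lra.
Qed.

Definition MM q := ee*ee*q^4 + (2*ee^4+8*ee^3+48*ee^2)*q^2 + (ee^2+2*ee)*ee^2*(ee^2+6*ee).

Lemma MM_y q : MM q = ee*ee*((q*q)*(q*q)) + (2*ee^4+8*ee^3+48*ee^2)*(q*q) + (ee^2+2*ee)*ee^2*(ee^2+6*ee).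
Proof. unfold MM. ring. Qed.

Lemma e_pows : 0 < ee^2 <= 1 /\ 0 < ee^3 <= 1 /\ 0 < ee^4 <= 1.
Proof.
  pose proof ee_bnd. assert (0 < ee*ee <= 1) by (split; nra).
  assert (0 < ee*ee*ee <= 1) by (split; nra).
  assert (0 < ee*ee*ee*ee <= 1) by (split; nra).
  simpl. rewrite !Rmult_1_r. rewrite <- !Rmult_assoc. tauto.
Qed.

Lemma MM_pos q : 0 < MM q.
Proof.
  rewrite MM_y. pose proof ee_bnd. pose proof e_pows.
  assert (0 <= q*q) by nra. set (y := q*q) in *. clearbody y.
  assert (0 < (ee^2+2*ee)*ee^2*(ee^2+6*ee)).
  { apply Rmult_lt_0_compat. apply Rmult_lt_0_compat. nra. nra. nra. }
  assert (0 <= (2*ee^4+8*ee^3+48*ee^2)*y) by (apply Rmult_le_pos; nra).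
  assert (0 <= ee*ee*(y*y)) by (apply Rmult_le_pos; nra).
  lra.
Qed.

Lemma MM_le q : 1 <= q -> MM q <= 80 * ((q*q)*(q*q)).
Proof.
  intros Hq. rewrite MM_y. pose proof ee_bnd. pose proof e_pows.
  assert (1 <= q*q) by nra. set (y := q*q) in *. clearbody y.
  assert ((ee^2+2*ee)*ee^2*(ee^2+6*ee) <= 21).
  { assert (ee^2+2*ee <= 3) by nra. assert (ee^2 + 6 * ee <= 7) by nra.
    assert ((ee^2+2*ee)*ee^2 <= 3) by nra. nra. }
  assert ((2*ee^4+8*ee^3+48*ee^2)*y <= 58 * (y*y)) by nra.
  assert (ee*ee*(y*y) <= y*y) by nra.
  nra.
Qed.

Lemma dG_neg q : 0 < q -> dG q < 0.
Proof.
  intros Hq. rewrite dG_eq by auto. fold (MM q). pose proof (MM_pos q).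
  pose proof (xq_pos q). pose proof ee_bnd.
  unfold Rdiv. rewrite Ropp_mult_distr_l_reverse. apply Ropp_lt_gt_0_contravar.
  apply Rmult_lt_0_compat; auto. apply Rinv_0_lt_compat.
  repeat apply Rmult_lt_0_compat; lra.
Qed.

Lemma dG_bnd q : 1 <= q -> - dG q <= 80 / q^3.
Proof.
  intros Hq. rewrite dG_eq by lra. fold (MM q). pose proof (MM_le q Hq).
  pose proof (xq_pos q). pose proof ee_bnd.
  rewrite <- Ropp_div, Ropp_involutive.
  assert (Hx : q*q <= xq q) by (unfold xq; nra).
  set (x := xq q) in *. clearbody x.
  apply cross_le. repeat apply Rmult_lt_0_compat; lra. simpl; nra.
  assert (q*q*q*q*q*q*q <= q * (x + 2 * ee) * x * (x + 6 * ee)).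
  { assert (q*q*(q*q) <= x*x) by nra.
    assert (q*q*(q*q)*(q*q) <= x*x*(x+6*ee)) by nra.
    assert (q*q*(q*q)*(q*q) <= (x + 2*ee)*x*(x+6*ee)).
    { assert (x*x*(x+6*ee) <= (x + 2*ee)*x*(x+6*ee)) by nra. lra. }
    nra. }
  simpl. nra.
Qed.

Lemma dX_bnd q : 2 <= q -> / (2 * q) <= dX q.
Proof.
  intros Hq. pose proof (xq_pos q). pose proof ee_bnd. pose proof e_pows.
  assert (dX q - / (2*q) = (q^4 + 10*ee*q^2 - ee^4 - 2*ee^3) / (2 * q * xq q * (xq q + 2*ee))).
  { unfold dX, xq in *. field. repeat split; lra. }
  assert (0 <= (q^4 + 10*ee*q^2 - ee^4 - 2*ee^3) / (2 * q * xq q * (xq q + 2*ee))).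
  { apply Rlt_le, Rdiv_lt_0_compat.
    destruct e_pows as [_ [[_ H3] [_ H4]]].
    assert (4 <= q*q) by nra. assert (16 <= q*q*(q*q)) by nra.
    assert (0 <= ee * (q*q)) by (apply Rmult_le_pos; nra).
    replace (q^4) with (q*q*(q*q)) by ring. replace (q^2) with (q*q) by ring. lra.
    repeat apply Rmult_lt_0_compat; lra. }
  lra.
Qed.

Lemma mvt_G a b : 0 < a < b -> exists c, a <= c <= b /\ Gq b - Gq a = dG c * (b - a).
Proof.
  intros Hab. assert (H := MVT_gen Gq a b dG). cbv zeta in H.
  rewrite Rmin_left, Rmax_right in H by lra.
  apply H.
  - intros x Hx. apply Gq_der. lra.
  - intros x Hx. apply continuity_pt_filterlim, (ex_derive_continuous (V:=R_NormedModule)).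
    eexists. apply Gq_der. lra.
Qed.
Lemma mvt_X a b : 0 < a < b -> exists c, a <= c <= b /\ Xq b - Xq a = dX c * (b - a).
Proof.
  intros Hab. assert (H := MVT_gen Xq a b dX). cbv zeta in H.
  rewrite Rmin_left, Rmax_right in H by lra.
  apply H.
  - intros x Hx. apply Xq_der.
  - intros x Hx. apply continuity_pt_filterlim, (ex_derive_continuous (V:=R_NormedModule)).
    eexists. apply Xq_der.
Qed.

Lemma slope_bnd q : 7 <= q ->
  0 < Xq (q + 2*PI) - Xq q /\
  Rabs ((Gq (q + 2*PI) - Gq q) / (Xq (q + 2*PI) - Xq q)) <= 320 / q.
Proof.
  intros Hq. pose proof PI_bnd.
  destruct (mvt_G q (q + 2*PI)) as [c [Hc HG]]; [lra|].
  destruct (mvt_X q (q + 2*PI)) as [d [Hd HX]]; [lra|].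
  pose proof (dX_bnd d ltac:(lra)) as HdX.
  pose proof (dG_bnd c ltac:(lra)) as HdG.
  pose proof (dG_neg c ltac:(lra)) as HdG0.
  assert (Hinv : / (2 * (q + 2*PI)) <= / (2 * d)) by (apply Rinv_le_contravar; lra).
  assert (HXl : 2 * PI / (2 * (q + 2*PI)) <= Xq (q + 2*PI) - Xq q).
  { rewrite HX. unfold Rdiv. replace (q + 2 * PI - q) with (2 * PI) by ring.
    rewrite (Rmult_comm (dX d)). apply Rmult_le_compat_l; lra. }
  assert (Hpos : 0 < 2 * PI / (2 * (q + 2*PI))) by (apply Rdiv_lt_0_compat; lra).
  split; [lra|].
  assert (Hc3 : 80 / c^3 <= 80 / q^3).
  { unfold Rdiv. apply Rmult_le_compat_l; [lra|]. apply Rinv_le_contravar.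
    simpl; nra. simpl. assert (q*q <= c*c) by nra. nra. }
  assert (HGa : Rabs (Gq (q + 2*PI) - Gq q) <= 80 / q^3 * (2*PI)).
  { rewrite HG. replace (q + 2 * PI - q) with (2 * PI) by ring.
    rewrite Rabs_mult, Rabs_left by lra. rewrite Rabs_pos_eq by lra.
    apply Rmult_le_compat_r; lra. }
  unfold Rdiv at 1. rewrite Rabs_mult, Rabs_inv, (Rabs_pos_eq (Xq _ - _)) by lra.
  apply Rle_trans with (80 / q^3 * (2*PI) * / (2 * PI / (2 * (q + 2*PI)))).
  { apply Rmult_le_compat. apply Rabs_pos. apply Rlt_le, Rinv_0_lt_compat; lra. auto.
    apply Rinv_le_contravar; lra. }
  replace (80 / q^3 * (2*PI) * / (2 * PI / (2 * (q + 2*PI)))) with (160 * (q + 2*PI) / q^3)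
    by (field; lra).
  apply cross_le. simpl; nra. lra.
  assert (q * q * q > 0) by nra. simpl. nra.
Qed.

Lemma lcgX_eq t : lcg_X Ix Iy t = Xq (qf t).
Proof. unfold lcg_X. rewrite rho_eq. apply lnX. Qed.
Lemma lcgY_eq t : -1 <= t -> lcg_Y Ix Iy t = 2 * Xq (qf t) + Gq (qf t).
Proof.
  intros Ht. unfold lcg_Y. rewrite speed_eq, (is_derive_unique _ _ _ (rho_der t)), rho_eq.
  apply lnY. apply qf_pos; auto.
Qed.

Lemma regular t : -1 <= t -> lcg_regular Ix Iy t.
Proof.
  intros Ht. pose proof (qf_pos t Ht). pose proof (xq_pos (qf t)). pose proof ee_bnd.
  unfold lcg_regular. repeat split.
  - eexists; apply dIx.
  - eexists; apply dIy.
  - eexists; apply ddIx.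
  - eexists; apply ddIy.
  - rewrite speed_eq. apply sqrt_lt_R0; auto.
  - rewrite curv_eq. lra.
  - eexists; apply rho_der.
  - rewrite (is_derive_unique _ _ _ (rho_der t)). unfold drq.
    assert (0 < sqrt (xq (qf t))) by (apply sqrt_lt_R0; auto).
    apply Rgt_not_eq. apply Rmult_lt_0_compat. lra. apply Rdiv_lt_0_compat.
    repeat apply Rmult_lt_0_compat; lra. apply pow_lt; lra.
Qed.

Definition slope t := (lcg_Y Ix Iy (t + PI) - lcg_Y Ix Iy t) / (lcg_X Ix Iy (t + PI) - lcg_X Ix Iy t).

Lemma key eps t : 0 < eps -> Rmax 7 (320 / eps) < t ->
  lcg_X Ix Iy (t + PI) - lcg_X Ix Iy t <> 0 /\ Rabs (slope t - 2) < eps.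
Proof.
  intros He Ht. pose proof PI_bnd.
  assert (H7 : 7 < t) by (eapply Rle_lt_trans; [apply Rmax_l | exact Ht]).
  assert (He' : 320 / eps < t) by (eapply Rle_lt_trans; [apply Rmax_r | exact Ht]).
  pose proof (qf_ge t).
  destruct (slope_bnd (qf t) ltac:(lra)) as [HX HB].
  unfold slope. rewrite !lcgX_eq, !lcgY_eq by lra. rewrite qf_PI.
  split; [lra|].
  replace ((2 * Xq (qf t + 2 * PI) + Gq (qf t + 2 * PI) - (2 * Xq (qf t) + Gq (qf t))) /
      (Xq (qf t + 2 * PI) - Xq (qf t)) - 2)
    with ((Gq (qf t + 2 * PI) - Gq (qf t)) / (Xq (qf t + 2 * PI) - Xq (qf t))) by (field; lra).
  eapply Rle_lt_trans; [exact HB|].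
  assert (320 < eps * qf t).
  { apply Rmult_lt_compat_l with (r := eps) in He'; auto.
    unfold Rdiv in He'. rewrite <- Rmult_assoc, (Rmult_comm eps 320), Rmult_assoc, Rinv_r in He' by lra. nra. }
  apply Rmult_lt_reg_r with (qf t). lra. unfold Rdiv. rewrite Rmult_assoc, Rinv_l by lra. lra.
Qed.

Theorem mainTheorem2 :
  (forall alpha c : R,
     exists t : R, -1 <= t /\ lcg_regular Ix Iy t /\
       lcg_Y Ix Iy t <> alpha * lcg_X Ix Iy t + c)
  /\
  is_lim (fun t => (lcg_Y Ix Iy (t + PI) - lcg_Y Ix Iy t) /
                   (lcg_X Ix Iy (t + PI) - lcg_X Ix Iy t))
         p_infty 2.
Proof.
  split.
  - intros alpha c.
    destruct (Classical_Prop.classic (exists t : R, -1 <= t /\ lcg_regular Ix Iy t /\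
       lcg_Y Ix Iy t <> alpha * lcg_X Ix Iy t + c)) as [H|H]; [exact H|].
    exfalso.
    assert (Hall : forall t, -1 <= t -> lcg_Y Ix Iy t = alpha * lcg_X Ix Iy t + c).
    { intros t Ht. destruct (Req_dec (lcg_Y Ix Iy t) (alpha * lcg_X Ix Iy t + c)) as [E|E]; auto.
      exfalso. apply H. exists t. split; auto. split; auto. apply regular; auto. }
    pose proof PI_bnd.
    assert (Ha : alpha = 2).
    { destruct (Req_dec alpha 2) as [E|E]; auto. exfalso.
      assert (Hpos : 0 < Rabs (alpha - 2)) by (apply Rabs_pos_lt; lra).
      set (t := Rmax 7 (320 / Rabs (alpha - 2)) + 1).
      destruct (key (Rabs (alpha - 2)) t Hpos) as [HX HB]; [unfold t; lra|].
      assert (Ht7 : 7 <= t) by (unfold t; pose proof (Rmax_l 7 (320 / Rabs (alpha - 2))); lra).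
      unfold slope in HB. rewrite (Hall t), (Hall (t + PI)) in HB by lra.
      replace ((alpha * lcg_X Ix Iy (t + PI) + c - (alpha * lcg_X Ix Iy t + c)) /
        (lcg_X Ix Iy (t + PI) - lcg_X Ix Iy t)) with alpha in HB by (field; auto).
      lra. }
    subst alpha.
    assert (HG : forall t, -1 <= t -> Gq (qf t) = c).
    { intros t Ht. pose proof (Hall t Ht). rewrite lcgY_eq, lcgX_eq in H1 by auto. lra. }
    pose proof (HG (-1) ltac:(lra)). pose proof (HG 0 ltac:(lra)).
    assert (Hq : qf 0 = qf (-1) + 2) by (unfold qf; ring).
    pose proof (qf_pos (-1) ltac:(lra)).
    destruct (mvt_G (qf (-1)) (qf 0)) as [d [Hd Hm]]; [lra|].
    pose proof (dG_neg d ltac:(lra)). replace (qf 0 - qf (-1)) with 2 in Hm by lra. lra.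
  - apply is_lim_spec. intros eps. simpl.
    exists (Rmax 7 (320 / eps)). intros t Ht.
    destruct (key eps t (cond_pos eps) Ht) as [_ HB]. exact HB.
Qed.
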